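(* Let $S=[S_1,\ldots,S_m]$ be a sequence of formulas and $S_i$ one of its formulas. Then both $\emptyset[S_i]\cdot S$ and $\emptyset[\neg S_i]\cdot S$ coincide with $\emptyset S$.
   Context: Propositional models are truth assignments over a finite set of variables; a formula used where a set of models is expected stands for its set of models. A doxastic state is a sequence $[C(0),\ldots,C(k)]$ of nonempty, pairwise disjoint sets of models covering all models. The flat doxastic state $\emptyset$ is $[\text{all models}]$. Lexicographic revision: $C\,\mathrm{lex}(A) = [C(0)\cap A,\ldots,C(k)\cap A, C(0)\setminus A,\ldots,C(k)\setminus A]$, empty sets discarded. For a sequence of formulas $T=[T_1,\ldots,T_n]$, $\emptyset T$ denotes $\emptyset$ revised lexicographically by $T_1$, then $T_2$, ..., then $T_n$. $\cdot$ denotes concatenation of sequences. *)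

(* Defs.v *)
From mathcomp Require Import all_boot.
Set Implicit Arguments. Unset Strict Implicit. Unset Printing Implicit Defensive.

Definition model (n : nat) := {ffun 'I_n -> bool}.

Inductive form (n : nat) : Type :=
| FVar of 'I_n
| FTop
| FBot
| FNeg of form n
| FAnd of form n & form n
| FOr of form n & form n
| FImp of form n & form n.

Arguments FTop {n}. Arguments FBot {n}.

Fixpoint sat n (f : form n) (m : model n) : bool :=
  match f with
  | FVar v => m v
  | FTop => true
  | FBot => false
  | FNeg g => ~~ sat g m
  | FAnd g h => sat g m && sat h m
  | FOr g h => sat g m || sat h m
  | FImp g h => sat g m ==> sat h m
  end.

Definition mods n (f : form n) : {set model n} := [set m | sat f m].

(* A doxastic state is a sequence of sets of models (index 0 = most plausible). *)
Definition state n := seq {set model n}.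

Definition flat n : state n := [:: setT].

Definition lex n (C : state n) (A : {set model n}) : state n :=
  [seq X <- [seq X :&: A | X <- C] ++ [seq X :\: A | X <- C] | X != set0].

Definition revise n (C : state n) (T : seq (form n)) : state n :=
  foldl (fun D f => lex D (mods f)) C T.

(* Main.v *)
Require Import Defs.
From mathcomp Require Import all_boot.
Set Implicit Arguments. Unset Strict Implicit. Unset Printing Implicit Defensive.

Section S.
Variable n : nat.
Implicit Types (D : seq {set model n}) (A B : {set model n}).

Definition ne (X : {set model n}) := X != set0.
Definition g D A : seq {set model n} := [seq X :&: A | X <- D] ++ [seq X :\: A | X <- D].
Definition split A D := flatten [seq [:: c :&: A; c :\: A] | c <- D].
Definition hom A D := all (fun c : {set model n} => (c \subset A) || (c \subset ~: A)) D.

Lemma Lm (f : {set model n} -> {set model n}) D : f set0 = set0 ->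
  filter ne (map f (filter ne D)) = filter ne (map f D).
Proof.
move=> f0; elim: D => //= X D IH.
case: (boolP (ne X)) => /= hX; first by rewrite IH.
by move: hX; rewrite /ne negbK => /eqP ->; rewrite f0 /= /ne eqxx.
Qed.

Lemma L1 D1 D2 A : filter ne D1 = filter ne D2 -> filter ne (g D1 A) = filter ne (g D2 A).
Proof.
move=> e; rewrite /g !filter_cat.
rewrite -(Lm D1 (f := fun X => X :&: A)) ?set0I // -(Lm D1 (f := fun X => X :\: A)) ?set0D //.
by rewrite e Lm ?set0I // Lm ?set0D.
Qed.

Lemma Lfold S D1 D2 : filter ne D1 = filter ne D2 ->
  filter ne (foldl (fun D f => g D (mods f)) D1 S) = filter ne (foldl (fun D f => g D (mods f)) D2 S).
Proof. by elim: S D1 D2 => //= f S IH D1 D2 e; apply: IH; apply: L1. Qed.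

Lemma revE S C : revise (filter ne C) S = filter ne (foldl (fun D f => g D (mods f)) C S).
Proof.
elim: S C => [|f S IH] C //=.
rewrite /revise /= -/(revise _ _).
have -> : lex (filter ne C) (mods f) = filter ne (g (filter ne C) (mods f)) by [].
rewrite IH; apply: Lfold; apply: L1; exact: filter_id.
Qed.

Lemma revE1 f S C : revise C (f :: S) = filter ne (foldl (fun D f => g D (mods f)) (g C (mods f)) S).
Proof. by rewrite /revise /= -/(revise _ _) -revE. Qed.

Lemma commute A B D : g (split A D) B = split A (g D B).
Proof.
rewrite /g /split !map_flatten map_cat flatten_cat -!map_comp.
congr (_ ++ _); apply: congr1; apply: eq_map => c /=; congr (_ :: _ :: _);
  apply/setP => x; rewrite !inE; case: (x \in A); case: (x \in B); by rewrite ?andbT ?andbF.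
Qed.

Lemma foldsplit A S D : foldl (fun D f => g D (mods f)) (split A D) S =
   split A (foldl (fun D f => g D (mods f)) D S).
Proof. by elim: S D => //= f S IH D; rewrite commute IH. Qed.

Lemma homg A B D : hom A D -> hom A (g D B).
Proof.
rewrite /hom /g all_cat !all_map => h; apply/andP; split; apply/allP => c /(allP h) /orP [] s /=;
  apply/orP; [left|right|left|right]; apply: subset_trans s;
  by [apply: subsetIl | apply: subsetDl].
Qed.

Lemma homA A D : hom A (g D A).
Proof.
rewrite /hom /g all_cat !all_map; apply/andP; split; apply/allP => c _ /=; apply/orP;
  [left|right]; apply/subsetP => x; rewrite !inE; by case: (x \in A); rewrite ?andbF.
Qed.

Lemma homfold A S D : hom A D -> hom A (foldl (fun D f => g D (mods f)) D S).
Proof. by elim: S D => //= f S IH D h; apply: IH; apply: homg. Qed.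

Lemma homC A D : hom A D -> hom (~: A) D.
Proof. by rewrite /hom setCK => /allP h; apply/allP => c /h; rewrite orbC. Qed.

Lemma filsplit A D : hom A D -> filter ne (split A D) = filter ne D.
Proof.
elim: D => //= c D IH /andP [hc hD].
rewrite /split /= -/(split A D).
case/orP: hc => s.
- have -> : c :&: A = c by apply/setIidPl.
  have -> : c :\: A = set0.
    apply/setP => x; rewrite !inE; case: (boolP (x \in c)) => xc; rewrite ?andbF //.
    by rewrite (subsetP s x xc).
  have e0 : ne set0 = false by rewrite /ne eqxx.
  by rewrite /= e0 IH.
- have -> : c :\: A = c.
    apply/setP => x; rewrite !inE; case: (boolP (x \in c)) => xc; rewrite ?andbF ?andbT //.
    by have := subsetP s x xc; rewrite inE.
  have -> : c :&: A = set0.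
    apply/setP => x; rewrite !inE; case: (boolP (x \in c)) => xc //.
    by have := subsetP s x xc; rewrite inE => /negbTE ->.
  have e0 : ne set0 = false by rewrite /ne eqxx.
  by rewrite /= e0 IH.
Qed.

Lemma gflat A : g (flat n) A = split A (flat n).
Proof. by []. Qed.

Lemma key f S : hom (mods f) (foldl (fun D f => g D (mods f)) (flat n) S) ->
  revise (flat n) (f :: S) = filter ne (foldl (fun D f => g D (mods f)) (flat n) S).
Proof. by move=> h; rewrite revE1 gflat foldsplit filsplit. Qed.

End S.

Theorem mainTheorem12 (n : nat) (S : seq (form n)) (i : nat) :
  i < size S ->
  revise (flat n) (nth FTop S i :: S) = revise (flat n) S /\
  revise (flat n) (FNeg (nth FTop S i) :: S) = revise (flat n) S.
Proof.
move=> hi.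
have hS : exists f S', S = f :: S' by case: S hi => // f S' _; exists f, S'.
have hom1 : hom (mods (nth FTop S i)) (foldl (fun D f => g D (mods f)) (flat n) S).
  set A := mods (nth FTop S i).
  rewrite -(cat_take_drop i S) (drop_nth FTop hi) foldl_cat /=.
  by apply: homfold; apply: homA.
have modsN : mods (FNeg (nth FTop S i)) = ~: mods (nth FTop S i).
  by apply/setP => x; rewrite !inE.
case: hS => f [S' eS].
have RS : revise (flat n) S = filter (@ne n) (foldl (fun D f => g D (mods f)) (flat n) S).
  by rewrite eS revE1 /=.
split; rewrite RS key //; rewrite modsN; exact: homC.
Qed.
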